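(* Let $G$ be a graph with a linear order $<$ on $V(G)$ satisfying the X-property, and let $s<t$ be vertices with $d^*:=\operatorname{dist}(s,t)<\infty$. Then, with $d=d^*$, at least one of the following holds: (i) $\beta_s(\sigma)=\beta_t(\tau)$ for some nonnegative integers $\sigma,\tau$ with $\sigma+\tau=d$; (ii) $G$ contains an edge between $\alpha_s(\sigma)$ and $\alpha_t(\tau)$ for some nonnegative integers $\sigma,\tau$ with $\sigma+\tau=d-1$; (iii) there are nonnegative integers $\sigma,\tau$ with $\sigma+\tau=d-3$ and vertices $v\in\{\alpha_s(\sigma),\beta_s(\sigma)\}$, $w\in\{\alpha_t(\tau),\beta_t(\tau)\}$ with $v<w$, $\operatorname{rhorizon}(v)\ge t$ and $\operatorname{lhorizon}(w)\le s$.
   Context: The X-property: for all vertices $p<q<r<s$, if $\{p,r\}\in E(G)$ and $\{q,s\}\in E(G)$ then $\{p,s\}\in E(G)$. $N[v]$ is the closed neighborhood; $\operatorname{lhorizon}(v):=\min N[v]$ and $\operatorname{rhorizon}(v):=\max N[v]$ w.r.t. $<$. For an integer $k\ge 0$: $\alpha_s(k)$ (resp. $\beta_s(k)$) is the leftmost (resp. rightmost) vertex reachable from $s$ by a path of length at most $k$ using only vertices $v\le t$; $\alpha_t(k)$ (resp. $\beta_t(k)$) is the rightmost (resp. leftmost) vertex reachable from $t$ by a path of length at most $k$ using only vertices $v\ge s$. *)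

(* Defs.v *)
From mathcomp Require Import all_boot all_order.
Set Implicit Arguments. Unset Strict Implicit. Unset Printing Implicit Defensive.
Import Order.TTheory.
Local Open Scope order_scope.

Section Defs.
Context {disp : Order.disp_t} {T : finOrderType disp}.

Definition simple_graph (e : rel T) : Prop :=
  (forall x y, e x y = e y x) /\ (forall x, ~~ e x x).

Definition X_property (e : rel T) : Prop :=
  forall p q r s : T, p < q -> q < r -> r < s -> e p r -> e q s -> e p s.

Definition reach_in (e : rel T) (P : pred T) (x : T) (k : nat) (v : T) : bool :=
  [exists n : 'I_k.+1, exists w : n.-tuple T,
     [&& path e x w, all P (x :: w) & last x w == v]].

Definition is_dist (e : rel T) (x y : T) (d : nat) : Prop :=
  (exists w : seq T, [/\ path e x w, size w = d & last x w = y]) /\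
  (forall w : seq T, path e x w -> last x w = y -> d <= size w)%N.

(* closed neighbourhood horizons *)
Definition lhorizon (e : rel T) (v : T) : T := \big[Order.min/v]_(u | e v u) u.
Definition rhorizon (e : rel T) (v : T) : T := \big[Order.max/v]_(u | e v u) u.

Definition alpha_s (e : rel T) (s t : T) (k : nat) : T :=
  \big[Order.min/s]_(v | reach_in e (fun u => u <= t) s k v) v.
Definition beta_s (e : rel T) (s t : T) (k : nat) : T :=
  \big[Order.max/s]_(v | reach_in e (fun u => u <= t) s k v) v.
Definition alpha_t (e : rel T) (s t : T) (k : nat) : T :=
  \big[Order.max/t]_(v | reach_in e (fun u => s <= u) t k v) v.
Definition beta_t (e : rel T) (s t : T) (k : nat) : T :=
  \big[Order.min/t]_(v | reach_in e (fun u => s <= u) t k v) v.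

End Defs.

(* Main.v *)
Require Import Defs.
From mathcomp Require Import all_boot all_order.
From mathcomp Require Import zify.
Import Order.TTheory.
Local Open Scope order_scope.
Set Implicit Arguments. Unset Strict Implicit. Unset Printing Implicit Defensive.

Section Gen.
Context {disp : Order.disp_t} {T : finOrderType disp}.
Variable e : rel T.

Lemma reachP (P : pred T) x k v :
  reach_in e P x k v <->
  exists w : seq T, [/\ (size w <= k)%N, path e x w, all P (x :: w) & last x w = v].
Proof.
split.
- case/existsP=> n /existsP [w /and3P [h1 h2 /eqP h3]].
  exists (val w); split=> //; rewrite size_tuple -ltnS; exact: ltn_ord.
- case=> w [h1 h2 h3 h4]; apply/existsP.
  have hs : (size w < k.+1)%N by [].
  exists (Ordinal hs); apply/existsP; exists (in_tuple w).
  by apply/and3P; split=> //; apply/eqP.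
Qed.

Lemma reach_P (P : pred T) x k v : reach_in e P x k v -> P v.
Proof.
case/reachP=> w [_ _ hA <-].
by move: hA => /allP; apply; exact: mem_last.
Qed.

Lemma reach_P0 (P : pred T) x k v : reach_in e P x k v -> P x.
Proof. by case/reachP=> w [_ _ /andP [] ]. Qed.

Lemma reach0 (P : pred T) x v : reach_in e P x 0 v -> v = x.
Proof. by case/reachP=> [[|? ?]] [] //= _ _ _ <-. Qed.

Lemma reach0' (P : pred T) x : P x -> reach_in e P x 0 x.
Proof. by move=> hx; apply/reachP; exists [::]; rewrite /= hx. Qed.

Lemma reach_mono (P : pred T) x k k' v : (k <= k')%N -> reach_in e P x k v -> reach_in e P x k' v.
Proof.
move=> hk /reachP [w [h1 h2 h3 h4]]; apply/reachP; exists w; split=> //.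
exact: leq_trans hk.
Qed.

Lemma reach_step (P : pred T) x k v z : reach_in e P x k v -> e v z -> P z ->
  reach_in e P x k.+1 z.
Proof.
case/reachP=> w [h1 h2 h3 h4] hvz hz; apply/reachP; exists (rcons w z); split.
- by rewrite size_rcons.
- by rewrite rcons_path h2 h4.
- by rewrite -rcons_cons all_rcons hz h3.
- by rewrite last_rcons.
Qed.

Lemma reach_inv (P : pred T) x k z : reach_in e P x k.+1 z ->
  reach_in e P x k z \/ exists y, reach_in e P x k y /\ e y z.
Proof.
case/reachP=> w [h1 h2 h3 h4].
case: (ltnP (size w) k.+1) => hs.
  by left; apply/reachP; exists w.
right; case/lastP: w h1 h2 h3 h4 hs => [|w' y] h1 h2 h3 h4 hs.
  by [].
exists (last x w'); split.
- apply/reachP; exists w'; split=> //.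
  + by move: h1; rewrite size_rcons.
  + by move: h2; rewrite rcons_path => /andP [].
  + by move: h3; rewrite -rcons_cons all_rcons => /andP [].
- by move: h2; rewrite rcons_path last_rcons in h4 * => /andP [_]; rewrite h4.
Qed.


Lemma big_max_ub (P : pred T) (x0 v : T) : P v -> v <= \big[Order.max/x0]_(u | P u) u.
Proof.
move=> hv.
have: v \in index_enum T by exact: mem_index_enum.
elim: (index_enum T) => // a r IH; rewrite inE big_cons.
case/orP => [/eqP <- | h]; first by rewrite hv le_max lexx.
by case: (P a); rewrite ?le_max IH ?orbT.
Qed.

Lemma big_min_lb (P : pred T) (x0 v : T) : P v -> \big[Order.min/x0]_(u | P u) u <= v.
Proof.
move=> hv.
have: v \in index_enum T by exact: mem_index_enum.
elim: (index_enum T) => // a r IH; rewrite inE big_cons.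
case/orP => [/eqP <- | h]; first by rewrite hv ge_min lexx.
by case: (P a); rewrite ?ge_min IH ?orbT.
Qed.

Lemma big_max_mem (P : pred T) (x0 : T) : P x0 -> P (\big[Order.max/x0]_(u | P u) u).
Proof.
move=> h0; apply: (big_ind (fun y => is_true (P y))) => // a b ha hb.
by case: (leP a b).
Qed.

Lemma big_min_mem (P : pred T) (x0 : T) : P x0 -> P (\big[Order.min/x0]_(u | P u) u).
Proof.
move=> h0; apply: (big_ind (fun y => is_true (P y))) => // a b ha hb.
by case: (leP a b).
Qed.

Lemma cross (P : pred T) x k v y : reach_in e P x k v ->
  (x < y < v) || (v < y < x) ->
  (exists2 i, (i < k)%N & reach_in e P x i y) \/
  exists i a b, [/\ (i < k)%N, reach_in e P x i a, reach_in e P x i.+1 b & e a b] /\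
     ((a < y < b) || (b < y < a)) /\ ((i.+1 < k)%N \/ b = v).
Proof.
elim: k v => [|k IH] v hv hy.
  rewrite (reach0 hv) in hy.
  by case/orP: hy => /andP [h1 h2]; move: (lt_trans h1 h2); rewrite ltxx.
case: (reach_inv hv) => [hv' | [u [hu huv]]].
  case: (IH v hv' hy) => [[i hi hr] | [i [a [b [[h1 h2 h3 h4] [h5 h6]]]]]].
    by left; exists i => //; apply: ltnW.
  right; exists i, a, b; split; first by split => //; apply: ltnW.
split => //.
  by case: h6 => [h6|h6]; [left; apply: ltnW | right].
case: (eqVneq u y) => [huy | hne].
  by left; exists k => //; rewrite -huy.
case hside: (((x < y) && (u < y)) || ((y < x) && (y < u))).
  right; exists k, u, v; split => //; split; last by right.
    case/orP: hy => /andP [h1 h2]; case/orP: hside => /andP [h3 h4].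
    - by rewrite h4 h2.
    - by move: (lt_trans h1 h3); rewrite ltxx.
    - by move: (lt_trans h2 h3); rewrite ltxx.
    - by rewrite h1 h4 orbT.
have hy' : (x < y < u) || (u < y < x).
  move/negbT: hside; rewrite negb_or => /andP [hs1 hs2].
  case/orP: hy => /andP [h1 h2].
    have hyu : y < u by move: hs1; rewrite h1 /= -leNgt le_eqVlt eq_sym (negbTE hne).
    by rewrite h1 hyu.
  have huy : u < y by move: hs2; rewrite h2 /= -leNgt le_eqVlt (negbTE hne).
  by rewrite huy h2 orbT.
case: (IH u hu hy') => [[i hi hr] | [i [a [b [[h1 h2 h3 h4] [h5 h6]]]]]].
  by left; exists i => //; apply: ltnW.
right; exists i, a, b; split; first by split => //; apply: ltnW.
split => //.
by left.
Qed.

Lemma exit_edge (p r u v : T) : X_property e -> (forall a b, e a b = e b a) ->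
  p < r -> e p r -> p < u -> u < r -> e u v -> ~~ ((p < v) && (v < r)) ->
  [\/ v = p, v = r, (r < v) && e p v | (v < p) && e v r].
Proof.
move=> hX hs hpr epr hpu hur euv hout.
case: (ltgtP v p) => [hvp | hpv | ->].
- apply: Or44; apply/andP; split => //; apply: (hX v p u r) => //.
  by rewrite hs.
- move: hout; rewrite hpv /= -leNgt; case: (ltgtP r v) => // [hrv | ->] _.
    apply: Or43; apply/andP; split => //; exact: (hX p u r v).
  exact: Or42.
- exact: Or41.
Qed.


Lemma conf (P : pred T) x p r K : X_property e -> (forall a b, e a b = e b a) ->
  p < r -> e p r ->
  (forall k z, (k <= K)%N -> reach_in e P x k z ->
      [/\ z != p, z != r, ~~ e p z & ~~ e z r]) ->
  forall k v, (k <= K)%N -> reach_in e P x k v ->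
    ((p < x) && (x < r)) = ((p < v) && (v < r)).
Proof.
move=> hX hs hpr epr hc; elim=> [|k IH] v hk hv.
  by rewrite (reach0 hv).
case: (reach_inv hv) => [hv' | [u [hu huv]]].
  exact: IH (ltnW hk) hv'.
rewrite (IH u (ltnW hk) hu).
have [hv1 hv2 hv3 hv4] := hc _ _ hk hv.
have [hu1 hu2 hu3 hu4] := hc _ _ (ltnW hk) hu.
case hin : ((p < u) && (u < r)); case hin' : ((p < v) && (v < r)) => //.
  case/andP: hin => h1 h2.
  case: (exit_edge hX hs hpr epr h1 h2 huv (negbT hin')) => [] h.
  - by rewrite h eqxx in hv1.
  - by rewrite h eqxx in hv2.
  - by case/andP: h => _ h; rewrite h in hv3.
  - by case/andP: h => _ h; rewrite h in hv4.
case/andP: hin' => h1 h2.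
have hvu : e v u by rewrite hs.
case: (exit_edge hX hs hpr epr h1 h2 hvu (negbT hin)) => [] h.
- by rewrite h eqxx in hu1.
- by rewrite h eqxx in hu2.
- by case/andP: h => _ h; rewrite h in hu3.
- by case/andP: h => _ h; rewrite h in hu4.
Qed.

End Gen.

Lemma ivt (Q : nat -> bool) m n : (m <= n)%N -> Q m -> ~~ Q n ->
  exists l, [/\ (m <= l)%N, (l < n)%N, Q l & ~~ Q l.+1].
Proof.
elim: n => [|n IH] hmn hm hn.
  by move: hmn hn; rewrite leqn0 => /eqP hm0; rewrite -hm0 hm.
case: (ltnP m n.+1) => hmn'; last first.
  have hmeq : m = n.+1 by apply/eqP; rewrite eqn_leq hmn.
  by move: hn; rewrite -hmeq hm.
case hQ : (Q n).
  by exists n; split => //; rewrite hQ.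
have [l [h1 h2 h3 h4]] := IH hmn' hm (negbT hQ).
by exists l; split => //; apply: ltnW.
Qed.

Ltac nlia := repeat match goal with
  | H : is_true ?b |- _ => lazymatch b with
      | leq _ _ => fail
      | _ => clear H end
  end; lia.

Section Main.
Context {disp : Order.disp_t} {T : finOrderType disp} (e : rel T).
Context (hsym : forall a b, e a b = e b a) (hX : X_property e).
Context (s t : T) (d : nat) (w0 : seq T).
Context (hst : s < t) (hp : path e s w0) (hsz : size w0 = d) (hlast : last s w0 = t)
        (hmin : forall w, path e s w -> last s w = t -> (d <= size w)%N).

Definition wd a b n := exists w, [/\ (size w <= n)%N, path e a w & last a w = b].
Definition xs l := nth s (s :: w0) l.
Local Notation Sk k v := (reach_in e (fun u => u <= t) s k v).
Local Notation Tk k v := (reach_in e (fun u => s <= u) t k v).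

Lemma wd_refl a : wd a a 0.
Proof. by exists [::]. Qed.

Lemma wd_cons a b c n : e a b -> wd b c n -> wd a c n.+1.
Proof. by move=> hab [w [h1 h2 h3]]; exists (b :: w); rewrite /= hab h2. Qed.

Lemma wd_cat a b c n m : wd a b n -> wd b c m -> wd a c (n + m).
Proof.
move=> [w [h1 h2 h3]] [w' [h1' h2' h3']]; exists (w ++ w'); split.
- by rewrite size_cat leq_add.
- by rewrite cat_path h2 h3 h2'.
- by rewrite last_cat h3 h3'.
Qed.

Lemma wd_snoc a b c n : wd a b n -> e b c -> wd a c n.+1.
Proof.
move=> h hbc; rewrite -addn1; apply: (wd_cat h).
by apply: wd_cons hbc _; exact: wd_refl.
Qed.

Lemma wd_sym a b n : wd a b n -> wd b a n.
Proof.
case=> w [h1 h2 h3]; elim: w a n h1 h2 h3 => [|z w IH] a n /=.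
  by move=> _ _ ->; exists [::].
case: n => [//|n] h1 /andP [haz hpw] hlw.
apply: (wd_snoc (IH z n h1 hpw hlw)); by rewrite hsym.
Qed.

Lemma wd_mono a b n m : (n <= m)%N -> wd a b n -> wd a b m.
Proof. by move=> hnm [w [h1 h2 h3]]; exists w; split => //; exact: leq_trans hnm. Qed.

Lemma reach_wd (P : pred T) x k v : reach_in e P x k v -> wd x v k.
Proof. by case/reachP=> w [h1 h2 h3 h4]; exists w. Qed.

Lemma wd_st n : wd s t n -> (d <= n)%N.
Proof. by case=> w [h1 h2 h3]; apply: leq_trans (hmin h2 h3) h1. Qed.

Lemma xs0 : xs 0 = s.
Proof. by []. Qed.

Lemma xsd : xs d = t.
Proof. by rewrite /xs -hsz -hlast; have := nth_last s (s :: w0). Qed.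

Lemma xs_edge l : (l < d)%N -> e (xs l) (xs l.+1).
Proof. by move=> hl'; move/pathP: hp => /(_ s l); rewrite hsz; apply. Qed.

Lemma wd_sx l : (l <= d)%N -> wd s (xs l) l.
Proof.
elim: l => [|l IH] hld; first exact: wd_refl.
apply: (wd_snoc (IH (ltnW hld))); exact: xs_edge.
Qed.

Lemma wd_xt l : (l <= d)%N -> wd (xs l) t (d - l).
Proof.
have H : forall m, (m <= d)%N -> wd (xs (d - m)) t m.
  elim=> [|m IH] hm; first by rewrite subn0 xsd; exact: wd_refl.
  apply: (@wd_cons _ (xs (d - m))); last exact: IH (ltnW hm).
  have -> : (d - m = (d - m.+1).+1)%N by nlia.
  apply: xs_edge; nlia.
move=> hl'; have := H (d - l)%N (leq_subr _ _); by rewrite subKn.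
Qed.

Lemma DF1 l k : (l <= d)%N -> wd s (xs l) k -> (l <= k)%N.
Proof. move=> hl' h; have := wd_st (wd_cat h (wd_xt hl')); nlia. Qed.

Lemma DFt l k : (l <= d)%N -> wd (xs l) t k -> (d - l <= k)%N.
Proof. move=> hl' h; have := wd_st (wd_cat (wd_sx hl') h); nlia. Qed.

Lemma chord a b : (a <= d)%N -> (b <= d)%N -> e (xs a) (xs b) -> (b <= a.+1)%N.
Proof. move=> ha hb h; apply: (DF1 hb); exact: wd_snoc (wd_sx ha) h. Qed.

Lemma xeq a b : (a <= d)%N -> (b <= d)%N -> xs a = xs b -> (b <= a)%N.
Proof. move=> ha hb h; apply: (DF1 hb); rewrite -h; exact: wd_sx. Qed.

Lemma DF5 a b u : Sk a u -> Tk b u -> (d <= a + b)%N.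
Proof. move=> h1 h2; exact: wd_st (wd_cat (reach_wd h1) (wd_sym (reach_wd h2))). Qed.

Lemma DF6 a b u w : Sk a u -> Tk b w -> e u w -> (d <= (a + b).+1)%N.
Proof.
move=> h1 h2 h; apply: wd_st; rewrite -addSn.
exact: wd_cat (wd_snoc (reach_wd h1) h) (wd_sym (reach_wd h2)).
Qed.

Lemma DFS l k : (l <= d)%N -> Sk k (xs l) -> (l <= k)%N.
Proof. by move=> hl' h; apply: DF1 hl' (reach_wd h). Qed.

Lemma DFS1 l k u : (l <= d)%N -> Sk k u -> e u (xs l) -> (l <= k.+1)%N.
Proof. by move=> hl' h hu; apply: DF1 hl' (wd_snoc (reach_wd h) hu). Qed.

Lemma DFT l k : (l <= d)%N -> Tk k (xs l) -> (d - l <= k)%N.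
Proof. by move=> hl' h; apply: DFt hl' (wd_sym (reach_wd h)). Qed.

Lemma DFT1 l k u : (l <= d)%N -> Tk k u -> e u (xs l) -> (d - l <= k.+1)%N.
Proof.
move=> hl' h hu; apply: DFt hl' (wd_sym _).
by apply: wd_snoc (reach_wd h) hu.
Qed.


Lemma S0 : Sk 0 s.
Proof. by apply: reach0'; rewrite /= ltW. Qed.

Lemma T0 : Tk 0 t.
Proof. by apply: reach0'; rewrite /= ltW. Qed.

Lemma GS σ u r z : t < r -> e u r -> (forall i, (i < σ)%N -> ~ Sk i u) ->
  (forall i z', Sk i z' -> e z' r -> (σ <= i)%N) -> Sk σ z ->
  (s < u < z) || (z < u < s) -> e z r && (z < u).
Proof.
move=> htr hur hnot hadj hz hy.
case: (cross hz hy) => [[i hi hr] | [i [a [b [[h1 h2 h3 h4] [h5 h6]]]]]].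
  by case: (hnot i hi hr).
have ha : a <= t := reach_P h2.
have hb : b <= t := reach_P h3.
case/orP: h5 => /andP [hl hh].
  have : e a r by apply: (hX hl hh) => //; exact: le_lt_trans htr.
  by move/(hadj _ _ h2); rewrite leqNgt h1.
have : e b r.
  by apply: (hX hl hh) => //; [exact: le_lt_trans htr | rewrite hsym].
move=> hbr; have := hadj _ _ h3 hbr.
case: h6 => [h6 | hbz]; first by rewrite leqNgt h6.
by move=> _; rewrite -hbz hbr hl.
Qed.

Lemma GT τ w p z : p < s -> e w p -> (forall i, (i < τ)%N -> ~ Tk i w) ->
  (forall i z', Tk i z' -> e z' p -> (τ <= i)%N) -> Tk τ z ->
  (t < w < z) || (z < w < t) -> e z p && (w < z).
Proof.
move=> hps hwp hnot hadj hz hy.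
case: (cross hz hy) => [[i hi hr] | [i [a [b [[h1 h2 h3 h4] [h5 h6]]]]]].
  by case: (hnot i hi hr).
have ha : s <= a := reach_P h2.
have hb : s <= b := reach_P h3.
case/orP: h5 => /andP [hl hh].
  have : e p b.
    by apply: (hX _ hl hh) => //; [exact: lt_le_trans ha | rewrite hsym].
  rewrite hsym => hbp; have := hadj _ _ h3 hbp.
  case: h6 => [h6 | hbz]; first by rewrite leqNgt h6.
  by move=> _; rewrite -hbz hbp hh.
have : e p a.
  by apply: (hX _ hl hh) => //; [exact: lt_le_trans hb | rewrite hsym | rewrite hsym].
by rewrite hsym => /(hadj _ _ h2); rewrite leqNgt h1.
Qed.

Lemma F2 a b v w : Sk a v -> Tk b w -> (a + b + 2 <= d)%N -> v < w.
Proof.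
move=> hv hw hab.
case: (ltP v w) => // hwv; exfalso.
case: (eqVneq w v) => [hweq | hne].
  by rewrite hweq in hw; have := DF5 hv hw; nlia.
have hwv' : w < v by rewrite lt_neqAle hne hwv.
have hsw : s <= w := reach_P hw.
case: (eqVneq s w) => [hseq | hsne].
  by rewrite -hseq in hw; have := DF5 S0 hw; nlia.
have hsw' : s < w by rewrite lt_neqAle hsne hsw.
have hy : (s < w < v) || (v < w < s) by rewrite hsw' hwv'.
case: (cross hv hy) => [[i hi hr] | [i [a' [b' [[h1 h2 h3 h4] [h5 h6]]]]]].
  by have := DF5 hr hw; nlia.
have ha' : Sk a a' by apply: reach_mono h2; nlia.
have hb' : Sk a b' by apply: reach_mono h3; nlia.
have hcond : forall lo hi, Sk a lo -> Sk a hi -> forall k z, (k <= b)%N -> Tk k z ->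
    [/\ z != lo, z != hi, ~~ e lo z & ~~ e z hi].
  move=> lo hi hlo hhi k z hk hz; split.
  - by apply/eqP => hzl; rewrite hzl in hz; have := DF5 hlo hz; nlia.
  - by apply/eqP => hzl; rewrite hzl in hz; have := DF5 hhi hz; nlia.
  - by apply/negP => hez; have := DF6 hlo hz hez; nlia.
  - by apply/negP => hez; rewrite hsym in hez; have := DF6 hhi hz hez; nlia.
case/orP: h5 => /andP [hl hh].
  have := conf hX hsym (lt_trans hl hh) h4 (hcond _ _ ha' hb') (leqnn b) hw.
  rewrite hl hh /= => /andP [_ htb].
  by have := reach_P h3; rewrite /= leNgt htb.
have h4' : e b' a' by rewrite hsym.
have := conf hX hsym (lt_trans hl hh) h4' (hcond _ _ hb' ha') (leqnn b) hw.
rewrite hl hh /= => /andP [_ hta].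
by have := reach_P h2; rewrite /= leNgt hta.
Qed.


Lemma bs_ub k v : Sk k v -> v <= beta_s e s t k.
Proof. by move=> h; apply: (big_max_ub (P := fun v => Sk k v)). Qed.
Lemma bs_mem k : Sk k (beta_s e s t k).
Proof. apply: (big_max_mem (P := fun v => Sk k v)); exact: reach_mono S0. Qed.
Lemma as_lb k v : Sk k v -> alpha_s e s t k <= v.
Proof. by move=> h; apply: (big_min_lb (P := fun v => Sk k v)). Qed.
Lemma as_mem k : Sk k (alpha_s e s t k).
Proof. apply: (big_min_mem (P := fun v => Sk k v)); exact: reach_mono S0. Qed.
Lemma at_ub k v : Tk k v -> v <= alpha_t e s t k.
Proof. by move=> h; apply: (big_max_ub (P := fun v => Tk k v)). Qed.
Lemma at_mem k : Tk k (alpha_t e s t k).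
Proof. apply: (big_max_mem (P := fun v => Tk k v)); exact: reach_mono T0. Qed.
Lemma bt_lb k v : Tk k v -> beta_t e s t k <= v.
Proof. by move=> h; apply: (big_min_lb (P := fun v => Tk k v)). Qed.
Lemma bt_mem k : Tk k (beta_t e s t k).
Proof. apply: (big_min_mem (P := fun v => Tk k v)); exact: reach_mono T0. Qed.
Lemma rh_ub v u : e v u -> u <= rhorizon e v.
Proof. by move=> h; apply: (big_max_ub (P := e v)). Qed.
Lemma lh_lb v u : e v u -> lhorizon e v <= u.
Proof. by move=> h; apply: (big_min_lb (P := e v)). Qed.

Lemma Sx l : (l <= d)%N -> (forall l', (l' <= l)%N -> xs l' <= t) -> Sk l (xs l).
Proof.
elim: l => [|l IH] hl hle; first exact: S0.
apply: reach_step (IH (ltnW hl) _) (xs_edge hl) (hle _ (leqnn _)).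
by move=> l' hl'; apply: hle; apply: leq_trans hl' _.
Qed.

Lemma Tx l : (l <= d)%N -> (forall l', (l <= l')%N -> (l' <= d)%N -> s <= xs l') ->
  Tk (d - l) (xs l).
Proof.
move=> hl hge.
have H : forall m, (m <= d - l)%N -> Tk m (xs (d - m)).
  elim=> [|m IH] hm; first by rewrite subn0 xsd; exact: T0.
  have hm' : (d - m = (d - m.+1).+1)%N by nlia.
  apply: reach_step (IH (ltnW hm)) _ _.
    by rewrite hsym hm'; apply: xs_edge; nlia.
  by apply: hge; nlia.
by have := H (d - l)%N (leqnn _); rewrite subKn.
Qed.

Lemma no_enclose K m j lo hi : Sk K lo -> Sk K hi -> e lo hi -> lo < xs m < hi ->
  (K.+2 <= m)%N -> (m <= j)%N -> (j <= d)%N -> t < xs j -> False.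
Proof.
move=> hlo hhi ehl hin hKm hmj hjd htj.
have hhit : hi <= t := reach_P hhi.
have hQj : ~~ ((lo < xs j) && (xs j < hi)).
  by rewrite negb_and -!leNgt (le_trans hhit (ltW htj)) orbT.
have [l [h1 h2 h3 h4]] := ivt (Q := fun l => (lo < xs l) && (xs l < hi)) hmj hin hQj.
case/andP: h3 => h3a h3b.
have hld : (l < d)%N by apply: leq_trans h2 hjd.
case: (exit_edge hX hsym (lt_trans h3a h3b) ehl h3a h3b (xs_edge hld) h4) => [] h.
- by rewrite -h in hlo; have := DFS hld hlo; nlia.
- by rewrite -h in hhi; have := DFS hld hhi; nlia.
- by case/andP: h => _ h; have := DFS1 hld hlo h; nlia.
- by case/andP: h => _ h; rewrite hsym in h; have := DFS1 hld hhi h; nlia.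
Qed.


Lemma bs_eq k j : (1 <= k)%N -> (k < j)%N -> (j <= d)%N -> t < xs j ->
  (forall l, (l < j)%N -> xs l <= t) ->
  (forall l, (k <= l)%N -> (l <= d)%N -> s <= xs l) -> beta_s e s t k = xs k.
Proof.
move=> hk1 hkj hjd htj hpre hsuf.
have hkd : (k <= d)%N by nlia.
have hxk : Sk k (xs k) by apply: Sx => // l' hl'; apply: hpre; nlia.
have hb := bs_mem k.
apply/le_anti; rewrite (bs_ub hxk) andbT.
case: (leP (beta_s e s t k) (xs k)) => // hlt; exfalso.
have hsk : s < xs k.
  rewrite lt_neqAle hsuf // andbT; apply/eqP => h.
  by have := xeq (a:=0) (b:=k) (leq0n _) hkd h; nlia.
have hy : (s < xs k < beta_s e s t k) || (beta_s e s t k < xs k < s) by rewrite hsk hlt.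
case: (cross hb hy) => [[i hi hr] | [i [a [b [[h1 h2 h3 h4] [h5 h6]]]]]].
  by have := DFS hkd hr; nlia.
have key : forall lo hi ilo ihi, Sk ilo lo -> Sk ihi hi -> e lo hi -> lo < xs k < hi ->
    (ilo < k)%N -> (ihi <= k)%N -> False.
  move=> lo hi ilo ihi hlo hhi ehl hin hilo hihi.
  have hhit : hi <= t := reach_P hhi.
  have hlot : lo <= t := reach_P hlo.
  have hQj : ~~ ((lo < xs j) && (xs j < hi)).
    by rewrite negb_and -!leNgt (le_trans hhit (ltW htj)) orbT.
  have [l [l1 l2 l3 l4]] := ivt (Q := fun l => (lo < xs l) && (xs l < hi)) (ltnW hkj) hin hQj.
  case/andP: l3 => l3a l3b.
  have hld : (l < d)%N by nlia.
  case: (exit_edge hX hsym (lt_trans l3a l3b) ehl l3a l3b (xs_edge hld) l4) => [] h.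
  - by rewrite -h in hlo; have := DFS hld hlo; nlia.
  - by rewrite -h in hhi; have := DFS hld hhi; nlia.
  - by case/andP: h => _ h; have := DFS1 hld hlo h; nlia.
  case/andP: h => hlt' h; rewrite hsym in h; have := DFS1 hld hhi h => hl'.
  have hlk : l = k by nlia.
  rewrite hlk in hlt'.
  have hk1j : (k.+1 < j)%N.
    have : k.+1 != j.
      apply/eqP => heq; rewrite heq in hlt'.
      by have := lt_trans htj (lt_le_trans hlt' hlot); rewrite ltxx.
    nlia.
  have hsk1 : s < xs k.+1.
    rewrite lt_neqAle hsuf //; last by nlia.
    rewrite andbT; apply/eqP => h'.
    by have := xeq (a:=0) (b:=k.+1) (leq0n _) (ltnW (leq_trans hk1j hjd)) h'; nlia.
  have hy2 : (s < xs k.+1 < lo) || (lo < xs k.+1 < s) by rewrite hsk1 hlt'.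
  case: (cross hlo hy2) => [[i2 hi2 hr2] | [i2 [a2 [b2 [[g1 g2 g3 g4] [g5 _]]]]]].
    by have := DFS (ltnW (leq_trans hk1j hjd)) hr2; nlia.
  have ga : Sk (k - 1) a2 by apply: reach_mono g2; nlia.
  have gb : Sk (k - 1) b2 by apply: reach_mono g3; nlia.
  have hKm : ((k - 1).+2 <= k.+1)%N by nlia.
  case/orP: g5 => hg.
    exact: (no_enclose ga gb g4 hg hKm (ltnW hk1j) hjd htj).
  have g4' : e b2 a2 by rewrite hsym.
  exact: (no_enclose gb ga g4' hg hKm (ltnW hk1j) hjd htj).
case/orP: h5 => hc.
  exact: (key a b i i.+1 h2 h3 h4 hc h1 h1).
have h6' : (i.+1 < k)%N.
  case: h6 => // hbz; case/andP: hc => hc1 _.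
  by rewrite hbz in hc1; have := lt_trans hc1 hlt; rewrite ltxx.
have h4' : e b a by rewrite hsym.
exact: (key b a i.+1 i h3 h2 h4' hc h6' (ltnW h1)).
Qed.


Lemma bt_eq i : (i.+1 < d)%N -> xs i < s ->
  (forall l, (i < l)%N -> (l <= d)%N -> s <= xs l) -> xs i.+1 <= t ->
  beta_t e s t (d - i.+1) = xs i.+1.
Proof.
move=> hkd hxi hsuf hkt0.
have hkd' : (i.+1 <= d)%N by nlia.
have hxk : Tk (d - i.+1) (xs i.+1) by apply: Tx => // l' h1 h2; apply: hsuf.
have hb := bt_mem (d - i.+1).
apply/le_anti; rewrite (bt_lb hxk) /=.
case: (leP (xs i.+1) (beta_t e s t (d - i.+1))) => // hlt; exfalso.
have hkt : xs i.+1 < t.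
  rewrite lt_neqAle hkt0 andbT; apply/eqP => h; rewrite -xsd in h.
  by have := xeq hkd' (leqnn d) h; nlia.
have hwp : e (xs i.+1) (xs i) by rewrite hsym; apply: xs_edge; nlia.
have hy : (t < xs i.+1 < beta_t e s t (d - i.+1)) || (beta_t e s t (d - i.+1) < xs i.+1 < t).
  by rewrite hlt hkt orbT.
have hnot : forall i', (i' < d - i.+1)%N -> ~ Tk i' (xs i.+1).
  by move=> i' hi' hr; have := DFT hkd' hr; nlia.
have hadj : forall i' z', Tk i' z' -> e z' (xs i) -> (d - i.+1 <= i')%N.
  by move=> i' z' hz' he; have := DFT1 (ltnW (ltnW hkd)) hz' he; nlia.
case/andP: (GT hxi hwp hnot hadj hb hy) => _ h.
by have := lt_trans h hlt; rewrite ltxx.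
Qed.

Lemma ij_adj i j : (1 <= j)%N -> (j < i)%N -> (i <= d)%N -> t < xs j ->
  (forall l, (l < j)%N -> xs l <= t) -> xs i < s -> i = j.+1.
Proof.
case: j => [//|j'] _ hji hid htj hpre hxi.
apply/eqP; rewrite eqn_leq hji andbT leqNgt; apply/negP => hij.
have hjd : (j'.+1 < d)%N by nlia.
have hpt : xs j' <= t by apply: hpre.
have hpr : xs j' < xs j'.+1 := le_lt_trans hpt htj.
have ep : e (xs j') (xs j'.+1) by apply: xs_edge; nlia.
have hpt' : xs j' < t.
  rewrite lt_neqAle hpt andbT; apply/eqP => h; rewrite -xsd in h.
  by have := xeq (ltnW (ltnW hjd)) (leqnn d) h; nlia.
have hpxi : xs j' < xs i.
  case hin : ((xs j' < xs i) && (xs i < xs j'.+1)); first by case/andP: hin.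
  exfalso.
  have hQd : ~~ ~~ ((xs j' < xs d) && (xs d < xs j'.+1)) by rewrite xsd hpt' htj.
  have [l [l1 l2 l3 l4]] := ivt (Q := fun l => ~~ ((xs j' < xs l) && (xs l < xs j'.+1)))
     hid (negbT hin) hQd.
  rewrite negbK in l4; case/andP: l4 => l4a l4b.
  have hlv : e (xs l.+1) (xs l) by rewrite hsym; apply: xs_edge.
  case: (exit_edge hX hsym hpr ep l4a l4b hlv l3) => [] h.
  - by have := xeq (ltnW (ltnW hjd)) (ltnW l2) (esym h); nlia.
  - by have := xeq (ltnW hjd) (ltnW l2) (esym h); nlia.
  - by case/andP: h => _ h; have := chord (ltnW (ltnW hjd)) (ltnW l2) h; nlia.
  - case/andP: h => _ h; rewrite hsym in h.
    by have := chord (ltnW hjd) (ltnW l2) h; nlia.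
have hQ0 : xs i < xs 0 by [].
have hQj : ~~ (xs i < xs j') by rewrite -leNgt ltW.
have [l [l1 l2 l3 l4]] := ivt (Q := fun l => xs i < xs l) (leq0n j') hQ0 hQj.
rewrite -leNgt in l4.
have hc : xs l.+1 < xs i.
  rewrite lt_neqAle l4 andbT; apply/eqP => h.
  by have := xeq (leq_trans l2 (ltnW (ltnW hjd))) hid h; nlia.
have hc't : xs l <= t by apply: hpre; nlia.
have ecc : e (xs l.+1) (xs l) by rewrite hsym; apply: xs_edge; nlia.
have hin : (xs l.+1 < xs i) && (xs i < xs l) by rewrite hc l3.
have hout : ~~ ((xs l.+1 < xs d) && (xs d < xs l)).
  by rewrite xsd negb_and; apply/orP; right; rewrite -leNgt.
have [l' [m1 m2 m3 m4]] := ivt (Q := fun m => (xs l.+1 < xs m) && (xs m < xs l)) hid hin hout.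
case/andP: m3 => m3a m3b.
have hld : (l < d)%N by nlia.
case: (exit_edge hX hsym (lt_trans m3a m3b) ecc m3a m3b (xs_edge m2) m4) => [] h.
- by have := xeq hld m2 (esym h); nlia.
- by have := xeq (ltnW hld) m2 (esym h); nlia.
- by case/andP: h => _ h; have := chord hld m2 h; nlia.
- case/andP: h => _ h; rewrite hsym in h.
  by have := chord (ltnW hld) m2 h; nlia.
Qed.


Lemma case3a i : (i.+1 <= d)%N -> xs i < s -> t < xs i.+1 ->
  (forall l, (l < i.+1)%N -> xs l <= t) ->
  (forall l, (i < l)%N -> (l <= d)%N -> s <= xs l) ->
  exists sigma tau : nat, (sigma + tau + 1 = d)%N /\
     e (alpha_s e s t sigma) (alpha_t e s t tau).
Proof.
move=> hid hxi htj hpre hsuf.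
exists i, (d - i.+1); split; first nlia.
have hxS : Sk i (xs i) by apply: Sx; [nlia | move=> l' hl'; apply: hpre; nlia].
have ha := as_mem i.
have hale := as_lb hxS.
have har : e (alpha_s e s t i) (xs i.+1).
  case: (eqVneq (alpha_s e s t i) (xs i)) => [-> | hne]; first exact: xs_edge.
  have hlt : alpha_s e s t i < xs i by rewrite lt_neqAle hne hale.
  have hy : (s < xs i < alpha_s e s t i) || (alpha_s e s t i < xs i < s).
    by rewrite hlt hxi orbT.
  have hnot : forall i', (i' < i)%N -> ~ Sk i' (xs i).
    by move=> i' hi' hr; have := DFS (ltnW hid) hr; nlia.
  have hadj : forall i' z', Sk i' z' -> e z' (xs i.+1) -> (i <= i')%N.
    by move=> i' z' hz' he; have := DFS1 hid hz' he; nlia.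
  by case/andP: (GS htj (xs_edge hid) hnot hadj ha hy).
have has : alpha_s e s t i < s := le_lt_trans hale hxi.
have hxT : Tk (d - i.+1) (xs i.+1) by apply: Tx.
have hg := at_mem (d - i.+1).
have hgge := at_ub hxT.
case: (eqVneq (alpha_t e s t (d - i.+1)) (xs i.+1)) => [-> | hne]; first done.
have hlt : xs i.+1 < alpha_t e s t (d - i.+1) by rewrite lt_neqAle eq_sym hne hgge.
have hwp : e (xs i.+1) (alpha_s e s t i) by rewrite hsym.
have hy : (t < xs i.+1 < alpha_t e s t (d - i.+1)) ||
          (alpha_t e s t (d - i.+1) < xs i.+1 < t) by rewrite htj hlt.
have hnot : forall i', (i' < d - i.+1)%N -> ~ Tk i' (xs i.+1).
  by move=> i' hi' hr; have := DFT hid hr; nlia.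
have hadj : forall i' z', Tk i' z' -> e z' (alpha_s e s t i) -> (d - i.+1 <= i')%N.
  by move=> i' z' hz' he; rewrite hsym in he; have := DF6 ha hz' he; nlia.
by case/andP: (GT has hwp hnot hadj hg hy) => h _; rewrite hsym.
Qed.

Lemma case3b i j : (i.+1 < j)%N -> (j <= d)%N -> xs i < s -> t < xs j ->
  (forall l, (l < j)%N -> xs l <= t) ->
  (forall l, (i < l)%N -> (l <= d)%N -> s <= xs l) ->
  exists sigma tau : nat, (sigma + tau = d)%N /\
     beta_s e s t sigma = beta_t e s t tau.
Proof.
move=> hij hjd hxi htj hpre hsuf.
exists i.+1, (d - i.+1); split; first nlia.
rewrite (bs_eq (k:=i.+1) (j:=j)) //.
rewrite bt_eq //; [nlia | apply: hpre; nlia].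
Qed.


Lemma case3c j' : (j'.+3 <= d)%N -> t < xs j'.+1 -> xs j'.+2 < s ->
  (forall l, (l < j'.+1)%N -> xs l <= t) ->
  (forall l, (j'.+2 < l)%N -> (l <= d)%N -> s <= xs l) ->
  exists sigma tau : nat, (sigma + tau + 3 = d)%N /\
     exists v w : T,
       [/\ v \in [:: alpha_s e s t sigma; beta_s e s t sigma],
           w \in [:: alpha_t e s t tau; beta_t e s t tau],
           v < w, t <= rhorizon e v & lhorizon e w <= s].
Proof.
move=> hjd htj hps hpre hsuf.
have hu : Sk j' (xs j') by apply: Sx; [nlia | move=> l' hl'; apply: hpre; nlia].
have er : e (xs j') (xs j'.+1) by apply: xs_edge; nlia.
have hnotS : forall i', (i' < j')%N -> ~ Sk i' (xs j').
  by move=> i' hi' hr; have := DFS (ltnW (ltnW (ltnW hjd))) hr; nlia.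
have hadjS : forall i' z', Sk i' z' -> e z' (xs j'.+1) -> (j' <= i')%N.
  by move=> i' z' hz' he; have := DFS1 (ltnW (ltnW hjd)) hz' he; nlia.
have [v [hvm hvr hvS]] : exists v, [/\ v \in [:: alpha_s e s t j'; beta_s e s t j'],
    e v (xs j'.+1) & Sk j' v].
  case: (ltP (xs j') s) => hus.
    exists (alpha_s e s t j'); split; [by rewrite inE eqxx | | exact: as_mem].
    have hale := as_lb hu.
    case: (eqVneq (alpha_s e s t j') (xs j')) => [-> | hne]; first done.
    have hlt : alpha_s e s t j' < xs j' by rewrite lt_neqAle hne hale.
    have hy : (s < xs j' < alpha_s e s t j') || (alpha_s e s t j' < xs j' < s).
      by rewrite hlt hus orbT.
    by case/andP: (GS htj er hnotS hadjS (as_mem j') hy).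
  exists (beta_s e s t j'); split; [by rewrite !inE eqxx orbT | | exact: bs_mem].
  have hbge := bs_ub hu.
  case: (eqVneq (beta_s e s t j') (xs j')) => [-> | hne]; first done.
  have hlt : xs j' < beta_s e s t j' by rewrite lt_neqAle eq_sym hne hbge.
  exfalso.
  case: (eqVneq s (xs j')) => [hseq | hsne].
    have hj0 : j' = 0%N by have := xeq (a:=0) (b:=j') (leq0n _) (ltnW (ltnW (ltnW hjd))) hseq; nlia.
    have := bs_mem j'; rewrite hj0 => /reach0 hb0.
    by move: hlt; rewrite hj0 hb0 /= ltxx.
  have hsu : s < xs j' by rewrite lt_neqAle hsne hus.
  have hy : (s < xs j' < beta_s e s t j') || (beta_s e s t j' < xs j' < s) by rewrite hsu hlt.
  case/andP: (GS htj er hnotS hadjS (bs_mem j') hy) => _ h.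
  by have := lt_trans h hlt; rewrite ltxx.
set τ := (d - j'.+3)%N.
have hyT : Tk τ (xs j'.+3) by apply: Tx => // l' h1 h2; apply: hsuf.
have ey : e (xs j'.+3) (xs j'.+2) by rewrite hsym; apply: xs_edge.
have hnotT : forall i', (i' < τ)%N -> ~ Tk i' (xs j'.+3).
  by move=> i' hi' hr; have := DFT hjd hr; rewrite /τ in hi'; nlia.
have hadjT : forall i' z', Tk i' z' -> e z' (xs j'.+2) -> (τ <= i')%N.
  by move=> i' z' hz' he; have := DFT1 (ltnW hjd) hz' he; rewrite /τ; nlia.
have [w [hwm hwp hwT]] : exists w, [/\ w \in [:: alpha_t e s t τ; beta_t e s t τ],
    e w (xs j'.+2) & Tk τ w].
  case: (leP (xs j'.+3) t) => hyt.
    exists (beta_t e s t τ); split; [by rewrite !inE eqxx orbT | | exact: bt_mem].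
    have hble := bt_lb hyT.
    case: (eqVneq (beta_t e s t τ) (xs j'.+3)) => [-> | hne]; first done.
    have hlt : beta_t e s t τ < xs j'.+3 by rewrite lt_neqAle hne hble.
    exfalso.
    case: (eqVneq (xs j'.+3) t) => [hyeq | hyne].
      rewrite -xsd in hyeq.
      have hd : d = j'.+3 by have := xeq hjd (leqnn d) hyeq; nlia.
      have := bt_mem τ; rewrite /τ hd subnn => /reach0 hb0.
      by move: hlt; rewrite /τ hd subnn hb0 -hd xsd ltxx.
    have hyt' : xs j'.+3 < t by rewrite lt_neqAle hyne hyt.
    have hy : (t < xs j'.+3 < beta_t e s t τ) || (beta_t e s t τ < xs j'.+3 < t).
      by rewrite hlt hyt' orbT.
    case/andP: (GT hps ey hnotT hadjT (bt_mem τ) hy) => _ h.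
    by have := lt_trans h hlt; rewrite ltxx.
  exists (alpha_t e s t τ); split; [by rewrite inE eqxx | | exact: at_mem].
  have hage := at_ub hyT.
  case: (eqVneq (alpha_t e s t τ) (xs j'.+3)) => [-> | hne]; first done.
  have hlt : xs j'.+3 < alpha_t e s t τ by rewrite lt_neqAle eq_sym hne hage.
  have hy : (t < xs j'.+3 < alpha_t e s t τ) || (alpha_t e s t τ < xs j'.+3 < t).
    by rewrite hlt hyt.
  by case/andP: (GT hps ey hnotT hadjT (at_mem τ) hy).
exists j', τ; split; first by rewrite /τ; nlia.
exists v, w; split => //.
- apply: (F2 hvS hwT); rewrite /τ; nlia.
- exact: le_trans (ltW htj) (rh_ub hvr).
- exact: le_trans (lh_lb hwp) (ltW hps).
Qed.


Lemma main_res :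
  (exists sigma tau : nat, (sigma + tau = d)%N /\
     beta_s e s t sigma = beta_t e s t tau) \/
  (exists sigma tau : nat, (sigma + tau + 1 = d)%N /\
     e (alpha_s e s t sigma) (alpha_t e s t tau)) \/
  (exists sigma tau : nat, (sigma + tau + 3 = d)%N /\
     exists v w : T,
       [/\ v \in [:: alpha_s e s t sigma; beta_s e s t sigma],
           w \in [:: alpha_t e s t tau; beta_t e s t tau],
           v < w, t <= rhorizon e v & lhorizon e w <= s]).
Proof.
case: (boolP [exists l : 'I_d.+1, t < xs l]) => hJ; last first.
  have hle : forall l, (l <= d)%N -> xs l <= t.
    move=> l hl; rewrite leNgt; apply/negP => h; move/existsP: hJ; apply.
    have hl' : (l < d.+1)%N by [].
    by exists (Ordinal hl').
  left; exists d, 0%N; split; first by rewrite addn0.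
  have htS : Sk d t by have := Sx (leqnn d) (fun l' hl' => hle l' hl'); rewrite xsd.
  rewrite (reach0 (bt_mem 0)).
  by apply/le_anti; rewrite (bs_ub htS) andbT; exact: (reach_P (bs_mem d)).
case: (boolP [exists l : 'I_d.+1, xs l < s]) => hI; last first.
  have hge : forall l, (l <= d)%N -> s <= xs l.
    move=> l hl; rewrite leNgt; apply/negP => h; move/existsP: hI; apply.
    have hl' : (l < d.+1)%N by [].
    by exists (Ordinal hl').
  left; exists 0%N, d; split => //.
  have hsT : Tk d s by have := Tx (leq0n d) (fun l _ h => hge l h); rewrite subn0.
  rewrite (reach0 (bs_mem 0)).
  by apply/le_anti; rewrite (bt_lb hsT) andbT; exact: (reach_P (bt_mem d)).
have exJ : exists l, (l <= d)%N && (t < xs l).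
  by case/existsP: hJ => l h; exists l; rewrite h andbT -ltnS ltn_ord.
have exI : exists l, (l <= d)%N && (xs l < s).
  by case/existsP: hI => l h; exists l; rewrite h andbT -ltnS ltn_ord.
have ubI : forall l, (l <= d)%N && (xs l < s) -> (l <= d)%N by move=> l /andP [].
case: (ex_minnP exJ) => j /andP [hjd htj] hjmin.
case: (ex_maxnP exI ubI) => i /andP [hid hxi] himax.
have hpre : forall l, (l < j)%N -> xs l <= t.
  move=> l hl; rewrite leNgt; apply/negP => h.
  have hld : (l <= d)%N by apply: leq_trans (ltnW hl) hjd.
  by have := hjmin l; rewrite hld h => /(_ isT); rewrite leqNgt hl.
have hsuf : forall l, (i < l)%N -> (l <= d)%N -> s <= xs l.
  move=> l hl hld; rewrite leNgt; apply/negP => h.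
  by have := himax l; rewrite hld h => /(_ isT); rewrite leqNgt hl.
have hj1 : (1 <= j)%N.
  case: j hjd htj hjmin hpre => // _ h; rewrite /= in h.
  by have := lt_trans h hst; rewrite ltxx.
have hid' : (i < d)%N.
  rewrite ltn_neqAle hid andbT; apply/eqP => h; rewrite h xsd in hxi.
  by have := lt_trans hxi hst; rewrite ltxx.
case: (ltngtP i j) => hij.
- case: (eqVneq i.+1 j) => [hj | hne].
    rewrite -hj in htj hpre hjd.
    by right; left; apply: (case3a hjd hxi htj hpre hsuf).
  left; apply: (case3b (i:=i) (j:=j)) => //.
  by rewrite ltn_neqAle hne hij.
- have hi := ij_adj hj1 hij hid htj hpre hxi.
  clear hjmin; case: j hj1 hij hjd htj hpre hi => [//|j'] _ hij hjd htj hpre hi.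
  right; right; apply: (case3c (j':=j')) => //.
  + by rewrite -hi.
  + by rewrite -hi.
  + by move=> l hl; apply: hsuf; rewrite hi.
- rewrite hij in hxi.
  by have := lt_trans (lt_trans hxi hst) htj; rewrite ltxx.
Qed.

End Main.

Theorem lemma13 (disp : Order.disp_t) (T : finOrderType disp) (e : rel T)
  (s t : T) (d : nat) :
  simple_graph e -> X_property e -> s < t -> is_dist e s t d ->
  (exists sigma tau : nat, (sigma + tau = d)%N /\
     beta_s e s t sigma = beta_t e s t tau) \/
  (exists sigma tau : nat, (sigma + tau + 1 = d)%N /\
     e (alpha_s e s t sigma) (alpha_t e s t tau)) \/
  (exists sigma tau : nat, (sigma + tau + 3 = d)%N /\
     exists v w : T,
       [/\ v \in [:: alpha_s e s t sigma; beta_s e s t sigma],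
           w \in [:: alpha_t e s t tau; beta_t e s t tau],
           v < w, t <= rhorizon e v & lhorizon e w <= s]).
Proof.
move=> [hsym _] hX hst [[w0 [hp hsz hl]] hmin].
exact: (main_res hsym hX hst hp hsz hl hmin).
Qed.
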